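(* There is a constant $c$ such that for every Boolean circuit $C$ with input nodes $\mathrm{in}_1,\dots,\mathrm{in}_n$ whose gates are only $\neg$-gates, $\vee$-gates and $\wedge$-gates, there exists an instruction sequence $X\in\mathrm{IS}_{br}$ in which the basic instruction $\mathrm{out}.\mathrm{set}{:}F$ does not occur (in any plain, positive test or negative test instruction) such that $X$ computes the $n$-ary Boolean function induced by $C$ and $|X|\le c\cdot(\mathrm{size}(C)+1)$.
   Context: $\mathbb B=\{T,F\}$. A Boolean circuit with input nodes $\mathrm{in}_1,\dots,\mathrm{in}_n$ is a finite directed acyclic graph whose non-input nodes (gates) are $\neg$-gates with one predecessor or $\vee$-/$\wedge$-gates with two predecessors, with one designated output node; the induced function $\mathbb B^n\to\mathbb B$ is the value of the output node when $\mathrm{in}_j$ carries $b_j$. Its size is its number of nodes. A primitive instruction is one of: a plain basic instruction $a$, a positive test instruction $+a$, a negative test instruction $-a$ (for a basic instruction $a$), a forward jump instruction $\#l$ ($l\in\mathbb N$), or the termination instruction $!$. An instruction sequence is a finite nonempty sequence $X=u_1;\dots;u_k$ of primitive instructions; its length is $|X|=k$. Basic instructions have the form $f.m$ where the focus $f$ is one of $\mathrm{in}{:}i$, $\mathrm{aux}{:}i$ ($i\ge 1$) or $\mathrm{out}$, each naming a Boolean register, and the method $m$ is one of $\mathrm{set}{:}T$, $\mathrm{set}{:}F$, $\mathrm{get}$. Executing $f.\mathrm{set}{:}b$ sets register $f$ to $b$ and yields reply $b$; executing $f.\mathrm{get}$ leaves the register unchanged and yields its content as reply. Execution of $X=u_1;\dots;u_k$: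 a counter starts at $1$. If the counter exceeds $k$, execution deadlocks. At position $i$: if $u_i=!$, execution terminates; if $u_i=\#l$, execution deadlocks if $l=0$ and otherwise the counter becomes $i+l$; if $u_i$ is $a$, $+a$ or $-a$, the basic instruction $a$ is executed yielding reply $r$, and the counter becomes $i+1$ for $u_i=a$; for $u_i=+a$ it becomes $i+1$ if $r=T$ and $i+2$ if $r=F$; for $u_i=-a$ it becomes $i+1$ if $r=F$ and $i+2$ if $r=T$. $\mathrm{IS}_{br}$ is the set of instruction sequences in which every basic instruction occurring belongs to $\{f.\mathrm{get}: f=\mathrm{in}{:}i \text{ or } f=\mathrm{aux}{:}i\}\cup\{f.\mathrm{set}{:}b: f=\mathrm{aux}{:}i \text{ or } f=\mathrm{out},\ b\in\mathbb B\}$. $X\in\mathrm{IS}_{br}$ computes $f:\mathbb B^n\to\mathbb B$ if for every $(b_1,\dots,b_n)\in\mathbb B^n$: when $X$ is executed with register $\mathrm{in}{:}j$ initialised to $b_j$ ($j\le n$) and all registers $\mathrm{aux}{:}i$ and $\mathrm{out}$ initialised to $F$, execution terminates (does not deadlock) without ever executing a basic instruction with focus $\mathrm{in}{:}j$ for $j>n$, and at termination register $\mathrm{out}$ contains $f(b_1,\dots,b_n)$. *)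

(* Defs.v *)
From mathcomp Require Import all_boot.
Set Implicit Arguments. Unset Strict Implicit. Unset Printing Implicit Defensive.

(* Nodes are numbered 0,1,2,...: node j-1 (j = 1..n) is the input node in_j,
   node n+k is the k-th gate (gates listed in a topological order). *)
Inductive gate : Type :=
  | GNot of nat
  | GOr of nat & nat
  | GAnd of nat & nat.

Record circuit : Type := Circuit { gates : seq gate; out_node : nat }.

Definition gate_wf (bound : nat) (g : gate) : bool :=
  match g with
  | GNot a => a < bound
  | GOr a b => (a < bound) && (b < bound)
  | GAnd a b => (a < bound) && (b < bound)
  end.

Definition circuit_wf (n : nat) (C : circuit) : bool :=
  all (fun k => gate_wf (n + k) (nth (GNot 0) (gates C) k)) (iota 0 (size (gates C)))
  && (out_node C < n + size (gates C)).

Definition circuit_size (n : nat) (C : circuit) : nat := n + size (gates C).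

Definition eval_gate (vals : seq bool) (g : gate) : bool :=
  match g with
  | GNot a => ~~ nth false vals a
  | GOr a b => nth false vals a || nth false vals b
  | GAnd a b => nth false vals a && nth false vals b
  end.

Definition node_values (inp : seq bool) (gs : seq gate) : seq bool :=
  foldl (fun vals g => rcons vals (eval_gate vals g)) inp gs.

Definition circuit_fun (n : nat) (C : circuit) (bs : n.-tuple bool) : bool :=
  nth false (node_values bs (gates C)) (out_node C).

Inductive focus : Type :=
  | FIn of nat
  | FAux of nat
  | FOut.

Inductive method : Type :=
  | MSet of bool
  | MGet.

Record basic := Basic { bfocus : focus; bmethod : method }.

Inductive prim : Type :=
  | Plain of basic
  | PTest of basic
  | NTest of basic
  | Jump of nat
  | Term.

Definition instr_seq := seq prim.

Definition basic_of (u : prim) : option basic :=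
  match u with
  | Plain a | PTest a | NTest a => Some a
  | _ => None
  end.

Definition basic_br (a : basic) : Prop :=
  match bfocus a, bmethod a with
  | FIn i, MGet => 1 <= i
  | FAux i, MGet => 1 <= i
  | FAux i, MSet _ => 1 <= i
  | FOut, MSet _ => True
  | _, _ => False
  end.

Definition IS_br (X : instr_seq) : Prop :=
  forall i, i < size X -> forall a, basic_of (nth Term X i) = Some a -> basic_br a.

Definition occurs (a : basic) (X : instr_seq) : Prop :=
  exists i, i < size X /\ basic_of (nth Term X i) = Some a.

Definition out_setF : basic := Basic FOut (MSet false).

Definition regs := focus -> bool.

Definition focus_eqb (f g : focus) : bool :=
  match f, g with
  | FIn i, FIn j => i == j
  | FAux i, FAux j => i == j
  | FOut, FOut => true
  | _, _ => false
  end.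

Definition exec_basic (a : basic) (s : regs) : bool * regs :=
  match bmethod a with
  | MSet b => (b, fun f => if focus_eqb f (bfocus a) then b else s f)
  | MGet => (s (bfocus a), s)
  end.

Definition focus_ok (n : nat) (a : basic) : bool :=
  match bfocus a with FIn j => j <= n | _ => true end.

(* terminates n X pc s s' : execution of X from counter pc (1-based) in
   register state s terminates, with final state s', without deadlocking and
   without executing a basic instruction with focus in:j for j > n. *)
Inductive terminates (n : nat) (X : instr_seq) : nat -> regs -> regs -> Prop :=
  | T_term pc s :
      0 < pc <= size X -> nth Term X pc.-1 = Term -> terminates n X pc s s
  | T_jump pc l s s' :
      0 < pc <= size X -> nth Term X pc.-1 = Jump l -> 0 < l ->
      terminates n X (pc + l) s s' -> terminates n X pc s s'
  | T_plain pc a s s' :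
      0 < pc <= size X -> nth Term X pc.-1 = Plain a -> focus_ok n a ->
      terminates n X pc.+1 (exec_basic a s).2 s' -> terminates n X pc s s'
  | T_ptest pc a s s' :
      0 < pc <= size X -> nth Term X pc.-1 = PTest a -> focus_ok n a ->
      terminates n X (if (exec_basic a s).1 then pc.+1 else pc.+2)
        (exec_basic a s).2 s' ->
      terminates n X pc s s'
  | T_ntest pc a s s' :
      0 < pc <= size X -> nth Term X pc.-1 = NTest a -> focus_ok n a ->
      terminates n X (if (exec_basic a s).1 then pc.+2 else pc.+1)
        (exec_basic a s).2 s' ->
      terminates n X pc s s'.

Definition init_regs (n : nat) (bs : n.-tuple bool) : regs :=
  fun f => match f with
           | FIn j => if (1 <= j <= n) then nth false bs j.-1 else false
           | _ => false
           end.

Definition computes (n : nat) (X : instr_seq) (f : n.-tuple bool -> bool) : Prop :=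
  forall bs : n.-tuple bool,
    exists s', terminates n X 1 (init_regs bs) s' /\ s' FOut = f bs.

(* Main.v *)
Require Import Defs.
From mathcomp Require Import all_boot.
Set Implicit Arguments. Unset Strict Implicit.

Definition nfocus (n j : nat) : focus := if j < n then FIn j.+1 else FAux j.+1.
Definition getb f := Basic f MGet.
Definition setT f := Basic f (MSet true).

Definition gcode n m g : seq prim :=
  match g with
  | GNot a => [:: NTest (getb (nfocus n a)); Plain (setT (FAux m.+1)); Jump 1; Jump 1]
  | GOr a b => [:: PTest (getb (nfocus n a)); Jump 2; PTest (getb (nfocus n b)); Plain (setT (FAux m.+1))]
  | GAnd a b => [:: NTest (getb (nfocus n a)); Jump 3; PTest (getb (nfocus n b)); Plain (setT (FAux m.+1))]
  end.

Definition final n o : seq prim := [:: PTest (getb (nfocus n o)); Plain (setT FOut); Term].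

Fixpoint progs n o m gs : seq prim :=
  match gs with
  | [::] => final n o
  | g :: gs' => gcode n m g ++ progs n o m.+1 gs'
  end.

Lemma size_gcode n m g : size (gcode n m g) = 4.
Proof. by case: g. Qed.

Lemma size_progs n o m gs : size (progs n o m gs) = 4 * size gs + 3.
Proof.
elim: gs m => [|g gs IH] m //=.
by rewrite size_cat size_gcode IH mulnS addnA.
Qed.

Lemma nth_progs n o gs : forall m k i, k < size gs -> i < 4 ->
  nth Term (progs n o m gs) (4 * k + i) = nth Term (gcode n (m + k) (nth (GNot 0) gs k)) i.
Proof.
elim: gs => [|g gs IH] m k i //= hk hi.
rewrite nth_cat size_gcode.
case: k hk => [|k] hk.
  by rewrite muln0 add0n hi addn0.
rewrite mulnS -addnA.
have -> : (4 + (4 * k + i) < 4) = false by rewrite ltnNge leq_addr.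
by rewrite addKn IH // addSnnS.
Qed.

Lemma nth_progs_end n o gs : forall m i,
  nth Term (progs n o m gs) (4 * size gs + i) = nth Term (final n o) i.
Proof.
elim: gs => [|g gs IH] m i //=.

rewrite nth_cat size_gcode mulnS -addnA.
have -> : (4 + (4 * size gs + i) < 4) = false by rewrite ltnNge leq_addr.
by rewrite addKn IH.
Qed.

Lemma nv_prefix inp gs : exists t, node_values inp gs = inp ++ t.
Proof.
elim: gs inp => [|g gs IH] inp /=.
  by exists [::]; rewrite cats0.
change (node_values inp (g :: gs)) with (node_values (rcons inp (eval_gate inp g)) gs).
have [t ->] := IH (rcons inp (eval_gate inp g)).
by exists (eval_gate inp g :: t); rewrite cat_rcons.
Qed.

Lemma size_nv inp gs : size (node_values inp gs) = size inp + size gs.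
Proof.
elim: gs inp => [|g gs IH] inp /=; first by rewrite addn0.
change (node_values inp (g :: gs)) with (node_values (rcons inp (eval_gate inp g)) gs).
by rewrite IH size_rcons addSnnS.
Qed.

Lemma eval_gate_ext P t g : gate_wf (size P) g -> eval_gate (P ++ t) g = eval_gate P g.
Proof.
by case: g => [a|a b|a b] /=; rewrite ?nth_cat => //; [move=> -> | case/andP=> -> -> ..].
Qed.

Lemma nv_gate inp gs k : k < size gs ->
  gate_wf (size inp + k) (nth (GNot 0) gs k) ->
  nth false (node_values inp gs) (size inp + k) =
  eval_gate (node_values inp gs) (nth (GNot 0) gs k).
Proof.
move=> hk hw.
have E : gs = take k gs ++ nth (GNot 0) gs k :: drop k.+1 gs.
  by rewrite -drop_nth // cat_take_drop.
set g := nth (GNot 0) gs k in hw *.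
rewrite E /node_values foldl_cat -/(node_values inp (take k gs)) /=.
set P := node_values inp (take k gs).
have sP : size P = size inp + k by rewrite size_nv size_take hk.
rewrite -/(node_values _ (drop k.+1 gs)).
have [t ->] := nv_prefix (rcons P (eval_gate P g)) (drop k.+1 gs).
rewrite -cats1 -catA nth_cat sP ltnn subnn /=.
by rewrite eval_gate_ext // sP.
Qed.

Lemma nv_in inp gs j : j < size inp -> nth false (node_values inp gs) j = nth false inp j.
Proof. by move=> hj; have [t ->] := nv_prefix inp gs; rewrite nth_cat hj. Qed.

Lemma nth_ne_lt (X : instr_seq) i : nth Term X i <> Term -> i < size X.
Proof. by move=> h; rewrite ltnNge; apply/negP=> /(nth_default Term) => e; apply: h. Qed.

Lemma pc_ok (X : instr_seq) i : nth Term X i <> Term -> 0 < i.+1 <= size X.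
Proof. by move=> /nth_ne_lt. Qed.

Lemma L_plain n X i a s s' : nth Term X i = Plain a -> focus_ok n a ->
  terminates n X i.+2 (exec_basic a s).2 s' -> terminates n X i.+1 s s'.
Proof. by move=> h ho ht; apply: T_plain ho ht => //; apply: pc_ok; rewrite h. Qed.

Lemma L_ptest n X i a s s' : nth Term X i = PTest a -> focus_ok n a ->
  terminates n X (if (exec_basic a s).1 then i.+2 else i.+3) (exec_basic a s).2 s' ->
  terminates n X i.+1 s s'.
Proof. by move=> h ho ht; apply: T_ptest ho ht => //; apply: pc_ok; rewrite h. Qed.

Lemma L_ntest n X i a s s' : nth Term X i = NTest a -> focus_ok n a ->
  terminates n X (if (exec_basic a s).1 then i.+3 else i.+2) (exec_basic a s).2 s' ->
  terminates n X i.+1 s s'.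
Proof. by move=> h ho ht; apply: T_ntest ho ht => //; apply: pc_ok; rewrite h. Qed.

Lemma L_jump n X i l s s' : nth Term X i = Jump l -> 0 < l ->
  terminates n X (i.+1 + l) s s' -> terminates n X i.+1 s s'.
Proof. by move=> h hl ht; apply: T_jump hl ht => //; apply: pc_ok; rewrite h. Qed.

Lemma L_term n X i s : nth Term X i = Term -> i < size X -> terminates n X i.+1 s s.
Proof. by move=> h hi; apply: T_term. Qed.

Definition Inv n (vals : seq bool) k (s : regs) :=
  (forall j, j < n + k -> s (nfocus n j) = nth false vals j) /\
  (forall i, n + k < i -> s (FAux i) = false) /\ s FOut = false.

Lemma nfocus_hi n k : nfocus n (n + k) = FAux (n + k).+1.
Proof. by rewrite /nfocus ltnNge leq_addr. Qed.

Lemma inv_upd n vals k s : Inv n vals k s ->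
  Inv n vals k.+1 (if nth false vals (n + k)
                   then (exec_basic (setT (FAux (n + k).+1)) s).2 else s).
Proof.
move=> [h1 [h2 h3]].
case E: (nth false vals (n + k)); split; rewrite /= ?addnS.
- move=> j; rewrite ltnS leq_eqVlt => /orP [/eqP -> | hj].
    by rewrite nfocus_hi /= eqxx.
  have -> : focus_eqb (nfocus n j) (FAux (n + k).+1) = false.
    by rewrite /nfocus; case: (j < n) => //=; rewrite eqSS ltn_eqF.
  exact: h1.
- split => //= i hi.
  have -> : (i == (n + k).+1) = false by rewrite gtn_eqF.
  by apply: h2; apply: ltn_trans hi.
- move=> j; rewrite ltnS leq_eqVlt => /orP [/eqP -> | hj]; last exact: h1.
  by rewrite nfocus_hi E; apply: h2.
- split => // i hi; apply: h2; exact: ltn_trans hi.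
Qed.

Lemma focus_ok_get n j : focus_ok n (getb (nfocus n j)).
Proof. by rewrite /nfocus /focus_ok /=; case: ltnP. Qed.

Lemma run n o gs inp : size inp = n ->
  (forall k, k < size gs -> gate_wf (n + k) (nth (GNot 0) gs k)) -> o < n + size gs ->
  forall d k s, size gs = k + d -> Inv n (node_values inp gs) k s ->
  exists s', terminates n (progs n o n gs) (4 * k).+1 s s' /\
             s' FOut = nth false (node_values inp gs) o.
Proof.
move=> hn hwf ho d; set vals := node_values inp gs; set X := progs n o n gs.
elim: d => [|d IH] k s hk hI.
- rewrite addn0 in hk; subst k.
  have hF i : nth Term X (4 * size gs + i) = nth Term (final n o) i by apply: nth_progs_end.
  have h0 := hF 0; have h1 := hF 1; have h2 := hF 2.
  rewrite addn0 /= in h0; rewrite addn1 /= in h1; rewrite addn2 /= in h2.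
  have [i1 [i2 i3]] := hI.
  have hv : s (nfocus n o) = nth false vals o by apply: i1.
  case E: (s (nfocus n o)).
  + exists (exec_basic (setT FOut) s).2; split; last by rewrite /= -hv E.
    apply: (L_ptest h0 (@focus_ok_get _ _)); rewrite /= E.
    apply: (L_plain h1) => //=.
    apply: (L_term _ _ h2); by rewrite /X size_progs addn3.
  + exists s; split; last by rewrite i3 -hv E.
    apply: (L_ptest h0 (@focus_ok_get _ _)); rewrite /= E.
    apply: (L_term _ _ h2); by rewrite /X size_progs addn3.
- have hk' : k < size gs by rewrite hk -addSnnS leq_addr.
  have hkd : size gs = k.+1 + d by rewrite hk addSnnS.
  set g := nth (GNot 0) gs k.
  have hw : gate_wf (n + k) g by apply: hwf.
  have hval : nth false vals (n + k) = eval_gate vals g.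
    by rewrite /vals -hn nv_gate // hn.
  have hI' := inv_upd hI.
  have [s' [Ht Ho]] := IH _ _ hkd hI'.
  exists s'; split => //.
  rewrite mulnS addnC addn4 in Ht.
  have hX i : i < 4 -> nth Term X (4 * k + i) = nth Term (gcode n (n + k) g) i.
    by move=> hi; apply: nth_progs.
  have h0 := hX 0 erefl; have h1 := hX 1 erefl; have h2 := hX 2 erefl; have h3 := hX 3 erefl.
  rewrite addn0 in h0; rewrite addn1 in h1; rewrite addn2 in h2; rewrite addn3 in h3.
  have [i1 _] := hI.
  clear hX; move: hw hval h0 h1 h2 h3 Ht; case: g => [a|a b|a b] /= hw hval h0 h1 h2 h3 Ht.
  + have ha : s (nfocus n a) = nth false vals a by apply: i1.
    rewrite hval -ha in Ht.
    apply: (L_ntest h0 (@focus_ok_get _ _)) => /=.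
    case E: (s (nfocus n a)); rewrite E /= in Ht.
    * apply: (L_jump h2) => //; rewrite addn1.
      apply: (L_jump h3) => //; by rewrite addn1.
    * apply: (L_plain h1) => //.
      apply: (L_jump h2) => //; rewrite addn1.
      apply: (L_jump h3) => //; by rewrite addn1.
  + case/andP: hw => hwa hwb.
    have ha : s (nfocus n a) = nth false vals a by apply: i1.
    have hb : s (nfocus n b) = nth false vals b by apply: i1.
    rewrite hval -ha -hb in Ht.
    apply: (L_ptest h0 (@focus_ok_get _ _)) => /=.
    case Ea: (s (nfocus n a)); rewrite Ea /= in Ht.
    * apply: (L_jump h1) => //; rewrite addn2.
      by apply: (L_plain h3).
    * apply: (L_ptest h2 (@focus_ok_get _ _)) => /=.
      case Eb: (s (nfocus n b)); rewrite Eb /= in Ht.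
      - by apply: (L_plain h3).
      - exact: Ht.
  + case/andP: hw => hwa hwb.
    have ha : s (nfocus n a) = nth false vals a by apply: i1.
    have hb : s (nfocus n b) = nth false vals b by apply: i1.
    rewrite hval -ha -hb in Ht.
    apply: (L_ntest h0 (@focus_ok_get _ _)) => /=.
    case Ea: (s (nfocus n a)); rewrite Ea /= in Ht.
    * apply: (L_ptest h2 (@focus_ok_get _ _)) => /=.
      case Eb: (s (nfocus n b)); rewrite Eb /= in Ht.
      - by apply: (L_plain h3).
      - exact: Ht.
    * apply: (L_jump h1) => //; by rewrite addn3.
Qed.

Definition goodb (a : basic) : bool :=
  match bfocus a, bmethod a with
  | FIn i, MGet => 0 < i
  | FAux i, MGet => 0 < i
  | FAux i, MSet _ => 0 < i
  | FOut, MSet true => true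
  | _, _ => false
  end.

Definition goodp (u : prim) : bool :=
  match basic_of u with None => true | Some a => goodb a end.

Lemma goodb_br a : goodb a -> basic_br a.
Proof. by case: a => [[i|i|] [[]|]]. Qed.

Lemma goodb_nF a : goodb a -> a <> out_setF.
Proof. by case: a => [[i|i|] [[]|]] //= _ []. Qed.

Lemma good_get n j : goodb (getb (nfocus n j)).
Proof. by rewrite /nfocus; case: (j < n). Qed.

Lemma all_good n o m gs : all goodp (progs n o m gs).
Proof.
elim: gs m => [|g gs IH] m /=.
  by rewrite /goodp /= good_get.
rewrite all_cat IH andbT.
by case: g => [a|a b|a b] /=; rewrite /goodp /= !good_get.
Qed.

Theorem theorem5 :
  exists c : nat,
    forall (n : nat) (C : circuit),
      circuit_wf n C ->
      exists X : instr_seq,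
        X <> [::] /\
        IS_br X /\
        ~ occurs out_setF X /\
        @computes n X (@circuit_fun n C) /\
        size X <= c * (circuit_size n C + 1).
Proof.
exists 4 => n C /andP [hall ho].
have hwf : forall k, k < size (gates C) -> gate_wf (n + k) (nth (GNot 0) (gates C) k).
  move=> k hk; apply: (allP hall); by rewrite mem_iota add0n.
have hg := all_good n (out_node C) n (gates C).
exists (progs n (out_node C) n (gates C)); split; [|split; [|split; [|split]]].
- by move=> e; have := size_progs n (out_node C) n (gates C); rewrite e addn3.
- move=> i hi a ha.
  have := all_nthP Term hg i hi; rewrite /goodp ha; exact: goodb_br.
- move=> [i [hi ha]].
  have := all_nthP Term hg i hi; rewrite /goodp ha => /goodb_nF; exact.
- move=> bs.
  have hn : size bs = n by rewrite size_tuple.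
  have hI : Inv n (node_values bs (gates C)) 0 (init_regs bs).
    split; last by split.
    move=> j; rewrite addn0 => hj.
    rewrite /nfocus hj /= hj nv_in // hn //.
  have [s' [Ht Ho]] := run hn hwf ho (esym (add0n _)) hI.
  exists s'; split; first by rewrite muln0 in Ht.
  by rewrite Ho.
- rewrite size_progs /circuit_size mulnDr muln1; apply: leq_add => //; by rewrite mulnDr leq_addl.
Qed.
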